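(* Let $(E,\mathscr{T},\le)$ be a locally compact $T_2$-preordered Tychonoff space with $G(\le)=\bigcap_{f\in\mathcal{F}}G_f$, and let $\mathcal{H}_1\subseteq\mathcal{H}_2\subseteq\mathcal{F}$ with $G(\le)=\bigcap_{h\in\mathcal{H}_1}G_h$. Then the $\mathcal{H}_2$-compactification dominates the $\mathcal{H}_1$-compactification.
   Context: $T_2$-preordered: the graph $G(\le)=\{(x,y):x\le y\}$ is closed in $E\times E$. $\mathcal{F}$ is the family of continuous isotone functions $f:E\to[0,1]$; $G_f=\{(x,y):f(x)\le f(y)\}$. $\mathcal{C}$ is the family of continuous functions $E\to[0,1]$ constant outside a compact set. For $\mathcal{H}\subseteq\mathcal{F}$ with $G(\le)=\bigcap_{h\in\mathcal{H}}G_h$, the $\mathcal{H}$-compactification is $c:E\to[0,1]^{\mathcal{H}\cup\mathcal{C}}$, $c(x)=(g(x))_{g\in\mathcal{H}\cup\mathcal{C}}$, with $cE$ the closure of $c(E)$ with the induced product topology and preorder $x\le_c y$ iff $x_h\le y_h$ for all $h\in\mathcal{H}$. For preorder compactifications $c_1,c_2$ of $E$, $c_2$ dominates $c_1$ if there is a continuous isotone map $C:c_2E\to c_1E$ with $C\circ c_2=c_1$. *)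

(* Defs.v *)
From HB Require Import structures.
From mathcomp Require Import all_boot all_order all_algebra.
From mathcomp Require Import all_classical all_reals all_analysis.
Unset Printing Implicit Defensive.
Import Order.TTheory GRing.Theory Num.Theory numFieldNormedType.Exports.
Local Open Scope classical_set_scope.
Local Open Scope ring_scope.

Section Defs.
Context {R : realType} {E : topologicalType}.

Definition graph_rel (le : E -> E -> Prop) : set (E * E) :=
  [set p | le p.1 p.2].

Definition Gf (f : E -> R) : set (E * E) := [set p | f p.1 <= f p.2].

Definition isotone (le : E -> E -> Prop) (f : E -> R) :=
  forall x y, le x y -> f x <= f y.

Definition unit_valued (f : E -> R) := forall x, 0 <= f x <= 1.

Definition Fam (le : E -> E -> Prop) : set (E -> R) :=
  [set f | continuous (f : E -> R) /\ isotone le f /\ unit_valued f].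

Definition Cfam : set (E -> R) :=
  [set g | continuous (g : E -> R) /\ unit_valued g /\
     exists K : set E, compact K /\ exists c : R, forall x, ~ K x -> g x = c].

(* index set H ∪ C of the H-compactification *)
Definition cidx (H : set (E -> R)) : Type := {g : E -> R | (H `|` Cfam) g}.

(* the embedding c : E -> [0,1]^(H ∪ C) (product topology) *)
Definition cmap (H : set (E -> R)) : E -> {ptws cidx H -> R} :=
  fun x i => (proj1_sig i) x.

Definition cE (H : set (E -> R)) : set {ptws cidx H -> R} :=
  closure (range (cmap H)).

Definition le_c (H : set (E -> R)) (x y : {ptws cidx H -> R}) :=
  forall i : cidx H, H (proj1_sig i) -> x i <= y i.

Definition dominates (H2 H1 : set (E -> R)) :=
  exists C : {ptws cidx H2 -> R} -> {ptws cidx H1 -> R},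
    [/\ (forall x, cE H2 x -> cE H1 (C x)),
        {within cE H2, continuous C},
        (forall x y, cE H2 x -> cE H2 y -> le_c H2 x y -> le_c H1 (C x) (C y))
      & (forall e : E, C (cmap H2 e) = cmap H1 e)].

End Defs.

(* Main.v *)
Require Import Defs.
From HB Require Import structures.
From mathcomp Require Import all_boot all_order all_algebra.
From mathcomp Require Import all_classical all_reals all_analysis.
Import Order.TTheory GRing.Theory Num.Theory numFieldNormedType.Exports.
Local Open Scope classical_set_scope.
Local Open Scope ring_scope.

Lemma ptwsP (R : realType) (U : Type) (F : set_system {ptws U -> R}) (f : {ptws U -> R}) :
  Filter F -> F --> f <-> forall t, (fun g : {ptws U -> R} => g t) @ F --> f t.
Proof.
move=> FF; rewrite cvg_sup; split.
  move=> + i => /(_ i).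
  rewrite cvg_image; last by rewrite eqEsubset; split=> v // _; exists (cst v).
  apply: cvg_trans => W /=; rewrite ?nbhs_simpl /fmap /= => [[W' + <-]].
  by apply: filterS => g W'g /=; exists g.
move=> + i => /(_ i).
rewrite cvg_image; last by rewrite eqEsubset; split=> v // _; exists (cst v).
move=> + W //=; rewrite ?nbhs_simpl => Q => /Q Q'; exists (@^~ i @^-1` W) => //.
by rewrite eqEsubset; split => [j [? + <-//]|j Wj]; exists (fun _ => j).
Qed.

Lemma restr_cont (R : realType) (A B : Type) (j : B -> A) :
  continuous (fun x : {ptws A -> R} => (fun b => x (j b)) : {ptws B -> R}).
Proof.
move=> x.
have h2 := proj1 (@ptwsP R A (nbhs x) x _) (@cvg_id _ (nbhs x)).
have h3 := proj2 (@ptwsP R B ((fun (x0 : {ptws A -> R}) (b : B) => x0 (j b)) @ nbhs x) (fun b => x (j b)) _).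
apply: h3 => t.
exact: (h2 _ (j t)).
Qed.

Theorem mainTheorem13 (R : realType) (E : topologicalType)
  (le : E -> E -> Prop) (H1 H2 : set (E -> R)) :
  (forall x, le x x) ->
  (forall x y z, le x y -> le y z -> le x z) ->
  closed (graph_rel le) ->
  hausdorff_space E ->
  completely_regular_space E ->
  locally_compact [set: E] ->
  graph_rel le = \bigcap_(f in Fam (R:=R) le) Gf f ->
  H1 `<=` H2 -> H2 `<=` Fam (R:=R) le ->
  graph_rel le = \bigcap_(h in H1) Gf h ->
  dominates H2 H1.
Proof.
move=> _ _ _ _ _ _ _ H12 _ _.
have jP : forall i : cidx H1, (H2 `|` Cfam) (proj1_sig i).
  by case=> g [h|h]; [left; apply: H12|right].
pose j (i : cidx H1) : cidx H2 := exist _ (proj1_sig i) (jP i).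
pose C := fun x : {ptws cidx H2 -> R} => (fun b => x (j b)) : {ptws cidx H1 -> R}.
Timeout 30 have Cc : continuous C := @restr_cont R (cidx H2) (cidx H1) j.
exists C; split.
- move=> x cx B nB.
  Timeout 30 have nB' : nbhs x (C @^-1` B) := Cc x B nB.
  Timeout 30 have [y [[e _ <-] He]] := cx _ nB'.
  by exists (cmap H1 e); split => //; exists e.
- Timeout 30 exact: continuous_subspaceT.
- by move=> x y _ _ lxy i Hi; apply: (lxy (j i)); apply: H12.
- by [].
Qed.
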